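(* Let $w\ge 1$. (a) Every permutation $\pi\in S_n$ of bandwidth $w$ (i.e. $|\pi_i-i|\le w$ for all $i$) is a product of at most $2w-1$ permutations of bandwidth $1$. (b) The bound $2w-1$ is sharp: for every $n\ge 2w$, the permutation $\sigma\in S_n$ given by $\sigma=(w+1)(w+2)\cdots(2w)\,1\,2\cdots w\,(2w+1)(2w+2)\cdots n$ in one-line notation (i.e. $\sigma_i=w+i$ for $1\le i\le w$, $\sigma_i=i-w$ for $w<i\le 2w$, $\sigma_i=i$ for $i>2w$) has bandwidth $w$ and cannot be written as a product of fewer than $2w-1$ permutations of bandwidth $1$.
   Context: A permutation $\rho\in S_n$ has bandwidth $w$ if $|\rho_i-i|\le w$ for all $i$, where $\rho_i=\rho(i)$. *)

(* Defs.v *)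
(* Permutations of {0,..,n-1} are 'S_n (0-indexed). *)
From mathcomp Require Import all_boot all_fingroup.
Set Implicit Arguments. Unset Strict Implicit. Unset Printing Implicit Defensive.

Definition bandwidth (n : nat) (rho : 'S_n) (w : nat) : Prop :=
  forall i : 'I_n, (rho i <= i + w) && (i <= rho i + w).

Definition prod_bw1_atmost (n : nat) (rho : 'S_n) (k : nat) : Prop :=
  exists ss : seq 'S_n,
    [/\ size ss <= k, (forall s, s \in ss -> bandwidth s 1)
      & rho = (\prod_(s <- ss) s)%g].

(* 0-indexed one-line form of sigma = (w+1)...(2w) 1 ... w (2w+1) ... n *)
Definition sigma_val (w i : nat) : nat :=
  if i < w then i + w else if i < 2 * w then i - w else i.

(* Main.v *)
Require Import Defs.
From mathcomp Require Import all_boot all_fingroup.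
From Stdlib Require Import Lia ZArith.
Set Implicit Arguments. Unset Strict Implicit. Unset Printing Implicit Defensive.
Ltac tolia := repeat match goal with
 | H : is_true (_ <= _) |- _ => apply (elimT leP) in H
 | H : is_true (_ < _) |- _ => apply (elimT ltP) in H
 | H: is_true (_ == _ :> nat) |- _ => apply (elimT eqP) in H
 | H: is_true (~~ (_ <= _)) |- _ => rewrite -ltnNge in H
 | H: is_true (~~ (_ < _)) |- _ => rewrite -leqNgt in H
 | |- is_true (_ <= _) => apply (introT leP)
 | |- is_true (_ < _) => apply (introT ltP)
 | |- is_true (_ == _ :> nat) => apply (introT eqP)
 end; 
 repeat match goal with H : context [addn] |- _ => rewrite -plusE in H
   | H : context [subn] |- _ => rewrite -minusE in H
   | H : context [muln] |- _ => rewrite -multE in H end;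
 rewrite -?plusE -?minusE -?multE; lia.

Lemma card_set_ord N (P : pred nat) : #|[set x : 'I_N | P x]| = count P (iota 0 N).
Proof.
rewrite -val_enum_ord count_map cardsE cardE /=.
by rewrite -size_filter /enum_mem filter_predT.
Qed.

Lemma count_iotaS (P : pred nat) N : count P (iota 0 N.+1) = count P (iota 0 N) + P N.
Proof. by rewrite -addn1 iotaD count_cat /= add0n addn0. Qed.

Lemma count_int lo hi N :
  count (fun p => lo <= p < hi) (iota 0 N) = minn hi N - minn lo N.
Proof.
elim: N => [|N IH]; first by rewrite !minn0.
rewrite count_iotaS IH.
case: (leqP lo N) => h1; case: (ltnP N hi) => h2 /=; rewrite /minn;
  repeat case: ltnP => ?; tolia.
Qed.

Lemma card_int N lo hi : #|[set x : 'I_N | lo <= x < hi]| = minn hi N - minn lo N.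
Proof. by rewrite (card_set_ord N (fun x => lo <= x < hi)) count_int. Qed.

Lemma card_int_le N lo hi : #|[set x : 'I_N | lo <= x < hi]| <= hi - lo.
Proof. rewrite card_int /minn; case: (ltnP hi N) => ?; case: (ltnP lo N) => ?; tolia. Qed.

Lemma card_lt N m : #|[set x : 'I_N | x < m]| = minn m N.
Proof.
have -> : [set x : 'I_N | x < m] = [set x : 'I_N | 0 <= x < m] by apply/setP => x; rewrite !inE.
by rewrite card_int min0n subn0.
Qed.

Lemma card_ge N m : #|[set x : 'I_N | m <= x]| = N - m.
Proof.
have -> : [set x : 'I_N | m <= x] = [set x : 'I_N | m <= x < N].
  by apply/setP => x; rewrite !inE ltn_ord andbT.
rewrite card_int /minn ltnn; case: (ltnP m N) => ?; tolia.
Qed.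

Lemma card_perm_pre N (a : 'S_N) (P : pred 'I_N) :
  #|[set p | P (a p)]| = #|[set y | P y]|.
Proof.
have -> : [set p | P (a p)] = a @^-1: [set y | P y] by apply/setP => x; rewrite !inE.
by rewrite card_preimset //; apply: perm_inj.
Qed.

Lemma cardU_le (T : finType) (A B : {set T}) : #|A :|: B| <= #|A| + #|B|.
Proof. by rewrite cardsU leq_subr. Qed.


Lemma bw1P N (s : 'S_N) (x : 'I_N) : bandwidth s 1 -> s x <= x + 1 /\ x <= s x + 1.
Proof. by move=> h; have /andP[] := h x. Qed.

Lemma swap_bw1 N (s : 'S_N) : bandwidth s 1 ->
  forall x y : 'I_N, nat_of_ord y = (nat_of_ord x).+1 -> nat_of_ord (s x) = nat_of_ord y -> nat_of_ord (s y) = nat_of_ord x.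
Proof.
move=> hs.
suff H : forall k (x y : 'I_N), nat_of_ord x <= k -> nat_of_ord y = (nat_of_ord x).+1 -> nat_of_ord (s x) = nat_of_ord y -> nat_of_ord (s y) = nat_of_ord x.
  by move=> x y; apply: (H (nat_of_ord x)).
elim=> [|k IH] x y hk hy hsx.
- set z := (s^-1)%g x.
  have hz : s z = x by rewrite /z permKV.
  have [hz1 hz2] := bw1P z hs.
  have hx0 : nat_of_ord x = 0 by tolia.
  rewrite hz in hz1 hz2.
  have : nat_of_ord z = 0 \/ nat_of_ord z = 1 by tolia.
  case=> hzv.
  + have zx : z = x by apply: ord_inj; rewrite hzv hx0.
    move: hsx; rewrite -zx hz; tolia.
  + have zy : z = y by apply: ord_inj; rewrite hzv hy hx0.
    by rewrite -zy hz.
- set z := (s^-1)%g x.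
  have hz : s z = x by rewrite /z permKV.
  have [hz1 hz2] := bw1P z hs.
  rewrite hz in hz1 hz2.
  have : nat_of_ord z = nat_of_ord x \/ nat_of_ord z = (nat_of_ord x).+1 \/ (nat_of_ord z).+1 = nat_of_ord x by tolia.
  case=> [hzv|[hzv|hzv]].
  + have zx : z = x by apply: ord_inj.
    move: hsx; rewrite -zx hz; tolia.
  + have zy : z = y by apply: ord_inj; rewrite hzv hy.
    by rewrite -zy hz.
  + have := IH z x _ (esym hzv) _.
    rewrite hz hsx hy => /(_ _ erefl).
    have -> : nat_of_ord z <= k by tolia.
    move=> /(_ isT) => h; tolia.
Qed.

Definition LS N w (p : 'S_N) j := #|[set x : 'I_N | (x < w) && (j <= p x)]|.

Lemma LS_A N w (p s : 'S_N) j : bandwidth s 1 -> LS w (p * s) j.+1 <= LS w p j.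
Proof.
move=> hs; apply: subset_leq_card; apply/subsetP => x; rewrite !inE permM.
case/andP=> -> h /=. have [h1 _] := bw1P (p x) hs. tolia.
Qed.

Lemma LS_B N w (p : 'S_N) j : LS w p j <= LS w p j.+1 + 1.
Proof.
rewrite /LS.
set A := [set x : 'I_N | (x < w) && (j.+1 <= p x)].
set B := [set x : 'I_N | nat_of_ord (p x) == j].
have hB : #|B| <= 1.
  apply/card_le1_eqP => x y; rewrite !inE => /eqP hx /eqP hy.
  apply: (perm_inj (s := p)); apply: ord_inj; by rewrite hx hy.
have h1 : #|[set x : 'I_N | (x < w) && (j <= p x)]| <= #|A :|: B|.
  apply: subset_leq_card; apply/subsetP => x; rewrite !inE.
  case/andP=> -> h /=. rewrite ltn_neqAle h andbT. case: eqP => /= e; last by []. by rewrite e eqxx.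
apply: leq_trans h1 (leq_trans (cardU_le A B) _); by rewrite leq_add2l.
Qed.

Lemma LS_C N w (p s : 'S_N) j : bandwidth s 1 ->
  LS w p j.+2 < LS w p j.+1 -> LS w (p * s) j.+1 <= LS w p j.+1.
Proof.
move=> hs hlt.
set X := [set x : 'I_N | (x < w) && (j.+1 <= (p * s)%g x)].
set Y := [set x : 'I_N | (x < w) && (j.+1 <= p x)].
have [x0 hx0Y hx0] : exists2 x0, x0 \in Y & nat_of_ord (p x0) = j.+1.
  case: (boolP [exists x, (x \in Y) && (nat_of_ord (p x) == j.+1)]).
    by case/existsP=> x /andP[h1 /eqP h2]; exists x.
  rewrite negb_exists => /forallP hall.
  move: hlt; rewrite /LS leqNgt => /negP; case.
  rewrite ltnS; apply: subset_leq_card; apply/subsetP => x; rewrite !inE.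
  case/andP=> hw h. rewrite hw /=. have := hall x. rewrite !inE hw h /= => hn.
  move: h; rewrite leq_eqVlt => /orP[/eqP e|//]. by rewrite -e eqxx in hn.
case: (boolP [exists x, (x \in X) && (nat_of_ord (p x) <= j)]).
- case/existsP=> x /andP[hxX hxj].
  have hX := hxX; rewrite inE permM in hX; case/andP: hX => _ hX.
  have [h1 _] := bw1P (p x) hs.
  have hpx : nat_of_ord (p x) = j by tolia.
  have hspx : nat_of_ord (s (p x)) = j.+1 by tolia.
  have hs0 : nat_of_ord (s (p x0)) = j.
    rewrite -hpx. apply: (swap_bw1 hs); by rewrite hx0 ?hpx.
  have hx0X : x0 \notin X by rewrite inE permM hs0 ltnn andbF.
  rewrite /LS -/X -/Y (cardsD1 x X) hxX (cardsD1 x0 Y) hx0Y !add1n ltnS.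
  apply: subset_leq_card; apply/subsetP => y; rewrite !inE.
  case/and3P=> hyx hy1 hy2. rewrite hy1 /=.
  apply/andP; split.
    apply/eqP => e; move: hx0X; by rewrite -e inE hy1 hy2.
  rewrite permM in hy2. have [h2 _] := bw1P (p y) hs.
  rewrite ltnNge; apply/negP => hle.
  have hpy : nat_of_ord (p y) = j by tolia.
  move: hyx => /eqP; apply; apply: (perm_inj (s := p)); apply: ord_inj.
  by rewrite hpy hpx.
- rewrite negb_exists => /forallP hall.
  apply: subset_leq_card; apply/subsetP => y hy.
  have := hall y; rewrite hy /= -ltnNge => h.
  by rewrite inE; move: hy; rewrite inE => /andP[-> _].
Qed.

Definition LInv N w (p : 'S_N) t := forall i j, 1 <= i <= w ->
  w - i + 1 + (t + 1 - i) <= j -> LS w p j < i.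

Lemma LInv_step N w (p s : 'S_N) t : bandwidth s 1 -> LInv w p t -> LInv w (p * s) t.+1.
Proof.
move=> hs IH i j /andP[hi1 hiw] hj.
case: j hj => [|j] hj; first by tolia.
case: (leqP i t.+1) => hit.
- apply: leq_ltn_trans (@LS_A N w p s j hs) _.
  apply: IH; [by rewrite hi1 hiw | tolia].
- have h1 : LS w p j.+1 < i by apply: IH; [by rewrite hi1 hiw | tolia].
  have h2 : LS w p j.+2 < i - 1 by apply: IH; [apply/andP; split; tolia | tolia].
  case: (leqP (LS w p j.+1) (i - 2)) => h3.
  + have := @LS_A N w p s j hs; have := @LS_B N w p j. move=> h4 h5. tolia.
  + have h4 : LS w p j.+2 < LS w p j.+1 by tolia.
    have := @LS_C N w p s j hs h4. move=> h5. tolia.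
Qed.

Lemma LInv_list N w (ss : seq 'S_N) : (forall s, s \in ss -> bandwidth s 1) ->
  forall p t, LInv w p t -> LInv w (p * \prod_(s <- ss) s)%g (t + size ss).
Proof.
elim: ss => [|s ss IH] hss p t hp.
  by rewrite big_nil mulg1 addn0.
rewrite big_cons mulgA /= addnS -addSn.
apply: IH.
  by move=> x hx; apply: hss; rewrite inE hx orbT.
apply: LInv_step => //; apply: hss; by rewrite inE eqxx.
Qed.

Lemma LInv0 N w : LInv w (1%g : 'S_N) 0.
Proof.
move=> i j /andP[hi1 hiw] hj.
rewrite /LS.
have -> : [set x : 'I_N | (x < w) && (j <= (1%g : 'S_N) x)] = [set x : 'I_N | j <= x < w].
  by apply/setP => x; rewrite !inE perm1 andbC.
apply: leq_ltn_trans (card_int_le N j w) _. tolia.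
Qed.

Lemma sigma_lt w n (i : 'I_n) : 2 * w <= n -> sigma_val w i < n.
Proof. move=> h; have hi := ltn_ord i; rewrite /sigma_val; case: (ltnP i w) => h1 /=; [|case: (ltnP i (2*w)) => h2 /=]; tolia. Qed.

Lemma sigma_inj w a b : sigma_val w a = sigma_val w b -> a = b.
Proof.
rewrite /sigma_val; case: (ltnP a w) => h1; case: (ltnP b w) => h2;
  case: (ltnP a (2 * w)) => h3; case: (ltnP b (2 * w)) => h4 /= e; tolia.
Qed.

Definition sig_fun w n (h : 2 * w <= n) (i : 'I_n) : 'I_n := Ordinal (sigma_lt i h).

Lemma sig_fun_inj w n (h : 2 * w <= n) : injective (sig_fun h).
Proof. move=> a b /(congr1 (@nat_of_ord n)) /= /sigma_inj e; exact: ord_inj. Qed.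

Lemma part_b (w : nat) (hw : 1 <= w) :
  forall n : nat, 2 * w <= n ->
     exists sigma : 'S_n,
       [/\ forall i : 'I_n, val (sigma i) = sigma_val w i,
           bandwidth sigma w
         & forall k, k < 2 * w - 1 -> ~ prod_bw1_atmost sigma k].
Proof.
move=> n hn.
exists (perm (@sig_fun_inj w n hn)); split.
- by move=> i; rewrite permE.
- move=> i; rewrite permE /= /sigma_val.
  case: ltnP => h1; [|case: ltnP => h2]; apply/andP; split; tolia.
- move=> k hk [ss [hsz hbw hprod]].
  have H := LInv_list hbw (@LInv0 n w).
  rewrite mul1g -hprod add0n in H.
  have h1 : 1 <= w <= w by rewrite hw leqnn.
  have h2 : w - w + 1 + (size ss + 1 - w) <= w by tolia.
  have := H w w h1 h2.
  have -> : LS w (perm (@sig_fun_inj w n hn)) w = w.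
    rewrite /LS.
    have -> : [set x : 'I_n | (x < w) && (w <= perm (@sig_fun_inj w n hn) x)] = [set x : 'I_n | x < w].
      apply/setP => x; rewrite !inE permE /= /sigma_val.
      case: (ltnP x w) => //= h. rewrite leq_addl //.
    rewrite card_lt; apply/minn_idPl. clear -hn hw. tolia.
  by rewrite ltnn.
Qed.

Definition av N (a : 'S_N) (j : nat) : nat :=
  if (insub j : option 'I_N) is Some p then nat_of_ord (a p) else 0.

Lemma avE N (a : 'S_N) (p : 'I_N) : av a p = a p.
Proof. by rewrite /av valK. Qed.

Definition sw N (a : 'S_N) (act : nat -> bool) (j : nat) : bool :=
  [&& 0 < j, j < N, act j, ~~ act j.+1 & (~~ act j.-1) && (av a j < av a j.-1)].

Definition Ff N (a : 'S_N) act (p : nat) : nat :=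
  if sw a act p.+1 then p.+1 else if sw a act p then p.-1 else p.

Lemma Ff_lt N (a : 'S_N) act p : p < N -> Ff a act p < N.
Proof.
rewrite /Ff /sw => hp. case: ifP => [/and5P[_ h _ _ _]//|_].
case: ifP => // _; tolia.
Qed.

Lemma Ff_inv N (a : 'S_N) act p : Ff a act (Ff a act p) = p.
Proof.
rewrite /Ff.
case: (boolP (sw a act p.+1)) => h1.
  have h2 : sw a act p.+2 = false.
    move: h1; rewrite /sw => /and5P[_ _ h _ _]. by rewrite /= h /= !andbF.
  by rewrite h2 h1.
case: (boolP (sw a act p)) => h3; last by rewrite (negbTE h1) (negbTE h3).
have hp : 0 < p by move: h3; rewrite /sw => /and5P[].
by rewrite prednK // h3.
Qed.

Lemma Ff_dist N (a : 'S_N) act p : Ff a act p <= p.+1 /\ p <= (Ff a act p).+1.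
Proof. rewrite /Ff; case: ifP => _; [|case: ifP => _]; split; tolia. Qed.

Definition swf N (a : 'S_N) act (p : 'I_N) : 'I_N := Ordinal (Ff_lt a act (ltn_ord p)).

Lemma swf_inj N (a : 'S_N) act : injective (swf a act).
Proof.
move=> x y /(congr1 (fun z : 'I_N => Ff a act z)) /=. rewrite !Ff_inv => e; exact: ord_inj.
Qed.

Definition swperm N (a : 'S_N) act : 'S_N := perm (@swf_inj N a act).

Lemma swpermE N (a : 'S_N) act (p : 'I_N) : nat_of_ord (swperm a act p) = Ff a act p.
Proof. by rewrite permE. Qed.

Lemma swperm_bw1 N (a : 'S_N) act : bandwidth (swperm a act) 1.
Proof. move=> p; rewrite swpermE; have [h1 h2] := Ff_dist a act p. apply/andP; split; tolia. Qed.

Lemma swperm_invol N (a : 'S_N) act (p : 'I_N) : swperm a act (swperm a act p) = p.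
Proof. apply: ord_inj; by rewrite !swpermE Ff_inv. Qed.

Definition D N (a : 'S_N) (v j : nat) := #|[set q : 'I_N | (q < j) && (v <= a q)]|.

Lemma D_round N (a : 'S_N) act v j :
  D (swperm a act * a) v j = #|[set q : 'I_N | (Ff a act q < j) && (v <= a q)]|.
Proof.
rewrite /D.
have -> : [set q : 'I_N | (q < j) && (v <= (swperm a act * a)%g q)] =
   (swperm a act) @^-1: [set q : 'I_N | (Ff a act q < j) && (v <= a q)].
  apply/setP => q; rewrite !inE permM -swpermE swperm_invol //.
by rewrite card_preimset //; apply: perm_inj.
Qed.

Lemma Fcut N (a : 'S_N) act j : ~~ sw a act j -> forall q, (Ff a act q < j) = (q < j).
Proof.
move=> hj q; rewrite /Ff.
case: (boolP (sw a act q.+1)) => h1.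
  case: (eqVneq q.+1 j) => [e|ne]; first by move: hj; rewrite -e h1.
  move/eqP: ne => ne. apply/idP/idP => ?; tolia.
case: (boolP (sw a act q)) => h2 //.
have hq : 0 < q by move: h2; rewrite /sw => /and5P[].
case: (eqVneq q j) => [e|ne]; first by move: hj; rewrite -e h2.
move/eqP: ne => ne. apply/idP/idP => ?; tolia.
Qed.

Lemma D_same N (a : 'S_N) act v j : ~~ sw a act j -> D (swperm a act * a) v j = D a v j.
Proof.
move=> hj; rewrite D_round /D; apply: eq_card => q; by rewrite !inE Fcut.
Qed.

Lemma D_succ N (a : 'S_N) v (p : 'I_N) : D a v p.+1 = D a v p + (v <= a p).
Proof.
rewrite /D.
case: (boolP (v <= a p)) => h.
  have -> : [set q : 'I_N | (q < p.+1) && (v <= a q)] = p |: [set q : 'I_N | (q < p) && (v <= a q)].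
    apply/setP => q; rewrite !inE ltnS leq_eqVlt.
    case: (eqVneq q p) => [->|hqp] /=; first by rewrite eqxx h.
    have -> : (nat_of_ord q == nat_of_ord p) = false by apply/negbTE; move: hqp; apply: contra => /eqP e; apply/eqP; exact: ord_inj.
    by [].
  by rewrite cardsU1 inE ltnn /= addnC.
rewrite addn0; apply: eq_card => q; rewrite !inE ltnS leq_eqVlt.
case: (eqVneq q p) => [->|hqp] /=; first by rewrite ltnn (negbTE h) !andbF.
have -> : (nat_of_ord q == nat_of_ord p) = false by apply/negbTE; move: hqp; apply: contra => /eqP e; apply/eqP; exact: ord_inj.
by [].
Qed.

Lemma D_active N (a : 'S_N) (act : nat -> bool) (v j : nat) : 0 < j -> j < N -> act j -> ~~ act j.+1 -> ~~ act j.-1 ->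
  (D (swperm a act * a) v j <= D a v j.-1) \/ (D (swperm a act * a) v j < D a v j.+1).
Proof.
move=> hj0 hjN haj haj1 haj2.
have hj1N : j.-1 < N by tolia.
pose pj : 'I_N := Ordinal hjN.
pose pj1 : 'I_N := Ordinal hj1N.
have epj1 : (nat_of_ord pj1).+1 = j by rewrite /= prednK.
have hswE : sw a act j = (a pj < a pj1).
  by rewrite /sw hj0 hjN haj haj1 haj2 /= -(avE a pj) -(avE a pj1).
case: (boolP (sw a act j)) => hsw; last first.
  rewrite D_same //.
  case: (boolP (v <= a pj)) => hv.
    right. have := D_succ a v pj. rewrite /= hv => ->. by rewrite addn1.
  left. have := D_succ a v pj1. rewrite epj1 => ->.
  have : ~~ (v <= a pj1).
    move: hsw hv; rewrite hswE -!ltnNge => h1 h2. tolia.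
  by move/negbTE => ->; rewrite addn0.
have hF1 : Ff a act pj1 = j by rewrite /Ff epj1 hsw.
have hsw1 : sw a act j.+1 = false by rewrite /sw haj /= !andbF.
have hF2 : Ff a act pj = j.-1 by rewrite /Ff /= hsw1 hsw.
rewrite D_round.
case: (boolP (v <= a pj1)) => hv.
- right.
  have hsub : [set q : 'I_N | (Ff a act q < j) && (v <= a q)] \subset
      [set q : 'I_N | (q < j.+1) && (v <= a q)] :\ pj1.
    apply/subsetP => q; rewrite !inE => /andP[h1 ->]; rewrite andbT.
    have [_ h3] := Ff_dist a act q.
    apply/andP; split; last by tolia.
    apply/eqP => e; move: h1; by rewrite e hF1 ltnn.
  apply: leq_ltn_trans (subset_leq_card hsub) _.
  rewrite /D (cardsD1 pj1 [set q : 'I_N | (q < j.+1) && (v <= a q)]) inE hv andbT.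
  have -> : nat_of_ord pj1 < j.+1 by tolia.
  by rewrite add1n ltnS leqnn.
- left.
  rewrite /D; apply: subset_leq_card; apply/subsetP => q; rewrite !inE => /andP[h1 h2].
  rewrite h2 andbT.
  have hq1 : q != pj1 by apply/eqP => e; move: hv; rewrite -e h2.
  have hq2 : q != pj.
    apply/eqP => e. have h5 : a pj < a pj1 by rewrite -hswE.
    move: h2; rewrite e => h2. move: hv; rewrite -ltnNge => hv. tolia.
  have [_ h3] := Ff_dist a act q.
  have n1 : nat_of_ord q <> j.-1 by move=> e; move/eqP: hq1; apply; apply: ord_inj.
  have n2 : nat_of_ord q <> j by move=> e; move/eqP: hq2; apply; apply: ord_inj.
  tolia.
Qed.

Lemma bwP N (a : 'S_N) w (p : 'I_N) : bandwidth a w -> a p <= p + w /\ p <= a p + w.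
Proof. by move=> h; have /andP[] := h p. Qed.

Lemma D_le_int N (a : 'S_N) w v j : bandwidth a w -> D a v j <= j - (v - w).
Proof.
move=> hbw; apply: leq_trans (card_int_le N (v - w) j).
apply: subset_leq_card; apply/subsetP => p; rewrite !inE => /andP[h1 h2].
have [h3 _] := bwP p hbw. rewrite h1 andbT. tolia.
Qed.

Lemma tight_struct N (a : 'S_N) w v : bandwidth a w -> 1 <= w -> D a v v = w ->
  [/\ w <= v, v <= N & forall p : 'I_N, v - w <= p < v -> v <= a p].
Proof.
move=> hbw hw ht.
set S := [set q : 'I_N | (q < v) && (v <= a q)].
set I := [set q : 'I_N | v - w <= q < v].
have hsub : S \subset I.
  apply/subsetP => p; rewrite !inE => /andP[h1 h2].
  have [h3 _] := bwP p hbw. rewrite h1 andbT. tolia.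
have hI := card_int N (v - w) v.
have hcard : #|S| = w by [].
have hle : w <= #|I| by rewrite -hcard; exact: subset_leq_card.
have h1 : w <= v /\ v <= N.
  move: hle; rewrite hI /minn; case: (ltnP v N) => ?; case: (ltnP (v - w) N) => ? hle; split; tolia.
case: h1 => h1 h2; split => // p hp.
have hIS : I \subset S.
  have : S == I by rewrite eqEcard hsub hcard hI /minn /=; case: (ltnP v N) => ?; case: (ltnP (v - w) N) => ?; tolia.
  by move/eqP => ->.
have : p \in S by apply: (subsetP hIS); rewrite inE.
by rewrite inE => /andP[].
Qed.

Lemma tight_barrier N (a : 'S_N) w v : bandwidth a w -> 1 <= w -> D a v v = w ->
  forall p : 'I_N, p < v - w -> a p < v - w.
Proof.
move=> hbw hw ht.
have [h1 h2 h3] := tight_struct hbw hw ht.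
set Z := [set q : 'I_N | a q < v - w].
set L := [set q : 'I_N | q < v - w].
have hZ : #|Z| = v - w.
  rewrite /Z (card_perm_pre a (fun y : 'I_N => y < v - w)) card_lt. apply/minn_idPl. tolia.
have hL : #|L| = v - w by rewrite card_lt; apply/minn_idPl; tolia.
have hsub : Z \subset L.
  apply/subsetP => p; rewrite !inE => hp.
  have [_ h4] := bwP p hbw.
  rewrite ltnNge; apply/negP => h5.
  have : v <= a p by apply: h3; apply/andP; split; tolia.
  move=> h6; tolia.
have : Z == L by rewrite eqEcard hsub hZ hL leqnn.
move/eqP => eZL p hp.
have : p \in Z by rewrite eZL inE.
by rewrite inE.
Qed.

Lemma tight_gap N (a : 'S_N) w v v' : bandwidth a w -> 1 <= w -> D a v v = w -> D a v' v' = w ->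
  v < v' -> v + w < v'.
Proof.
move=> hbw hw ht ht' hvv.
rewrite ltnNge; apply/negP => hle.
have [h1 h2 h3] := tight_struct hbw hw ht.
have hp0 : v - w < N by tolia.
pose p0 : 'I_N := Ordinal hp0.
have e1 : v <= a p0 by apply: h3; rewrite /=; apply/andP; split; tolia.
have e2 : a p0 < v' - w by apply: (tight_barrier hbw hw ht'); rewrite /=; tolia.
tolia.
Qed.

Lemma D_bar_le N (a : 'S_N) v b : (forall p : 'I_N, p < b -> a p < b) -> D a v b <= b - v.
Proof.
move=> hb; apply: leq_trans (card_int_le N v b).
rewrite -(card_perm_pre a (fun y : 'I_N => v <= y < b)).
apply: subset_leq_card; apply/subsetP => p; rewrite !inE => /andP[h1 h2].
by rewrite h2 hb.
Qed.

Lemma D_top N (a : 'S_N) v : D a v N <= N - v.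
Proof. apply: D_bar_le => p _; exact: ltn_ord. Qed.

Lemma D_right N (a : 'S_N) w v j : bandwidth a w -> D a v j <= maxn (j - v) w.
Proof.
move=> hbw.
set A := [set q : 'I_N | v <= a q].
set B := [set q : 'I_N | q < j].
have e1 : D a v j = #|A :&: B|.
  by rewrite /D; apply: eq_card => q; rewrite !inE andbC.
have e2 := cardsID B A.
have e3 : #|A| = N - v by rewrite /A (card_perm_pre a (fun y : 'I_N => v <= y)) card_ge.
have e4 : N - maxn j (v + w) <= #|A :\: B|.
  rewrite -card_ge; apply: subset_leq_card; apply/subsetP => q; rewrite !inE => hq.
  have [_ h] := bwP q hbw.
  move: hq; rewrite /maxn; case: ltnP => hh hq; (apply/andP; split; [rewrite -leqNgt|]; tolia).
rewrite e1; move: e2 e4; rewrite e3 /maxn; case: ltnP => h1; case: ltnP => h2 e2 e4; tolia.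
Qed.


Fixpoint MM (E : Z -> Z) (m : nat) (x : Z) : Z :=
  match m with
  | 0 => E x
  | S m' => Z.max (MM E m' (x - 1)) (MM E m' (x + 1) - 1)
  end.

Lemma MM_bound (E : Z -> Z) (m : nat) : forall (x c : Z),
  (forall r : nat, (r <= m)%coq_nat -> (E (x + 2 * Z.of_nat r - Z.of_nat m) <= c + Z.of_nat r)%Z) ->
  (MM E m x <= c)%Z.
Proof.
induction m as [|m IH]; intros x c H; simpl.
- specialize (H 0%nat (le_n 0)). replace (x + 2 * Z.of_nat 0 - Z.of_nat 0)%Z with x in H by lia. lia.
- apply Z.max_lub.
  + apply IH. intros r hr. specialize (H r ltac:(lia)).
    replace (x - 1 + 2 * Z.of_nat r - Z.of_nat m)%Z with (x + 2 * Z.of_nat r - Z.of_nat (S m))%Z by lia. exact H.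
  + assert (MM E m (x + 1) <= c + 1)%Z; [|lia].
    apply IH. intros r hr. specialize (H (S r) ltac:(lia)).
    replace (x + 1 + 2 * Z.of_nat r - Z.of_nat m)%Z with (x + 2 * Z.of_nat (S r) - Z.of_nat (S m))%Z by lia. lia.
Qed.

Lemma MM_ge (E : Z -> Z) : (forall x, Z.max 0 x <= E x)%Z -> forall m x, (Z.max 0 x <= MM E m x)%Z.
Proof.
intros HE m; induction m as [|m IH]; intros x; simpl; [apply HE|].
specialize (IH (x - 1)%Z) as h1. specialize (IH (x + 1)%Z) as h2. lia.
Qed.

Definition EE (w k : Z) (x : Z) : Z :=
  if (x =? 0)%Z then k else if (x <? 0)%Z then Z.max 0 (x + w) else Z.max x w.

Lemma EE_ge w k : (0 <= w)%Z -> (0 <= k)%Z -> forall x, (Z.max 0 x <= EE w k x)%Z.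
Proof.
intros hw hk x; unfold EE. destruct (Z.eqb_spec x 0); [lia|].
destruct (Z.ltb_spec x 0); lia.
Qed.

Lemma MM_final1 (w m : nat) k : (1 <= w)%coq_nat -> Z.of_nat m = (2 * Z.of_nat w - 1)%Z -> (0 <= k <= Z.of_nat w)%Z ->
  (MM (EE (Z.of_nat w) k) m 0 <= 0)%Z.
Proof.
intros hw hm hk. apply MM_bound. intros r hr. unfold EE.
destruct (Z.eqb_spec (0 + 2 * Z.of_nat r - Z.of_nat m) 0); [lia|].
destruct (Z.ltb_spec (0 + 2 * Z.of_nat r - Z.of_nat m) 0); lia.
Qed.

Lemma MM_final2 (w m : nat) k : (1 <= w)%coq_nat -> Z.of_nat m = (2 * Z.of_nat w - 2)%Z -> (0 <= k <= Z.of_nat w - 1)%Z ->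
  (MM (EE (Z.of_nat w) k) m 0 <= 0)%Z.
Proof.
intros hw hm hk. apply MM_bound. intros r hr. unfold EE.
destruct (Z.eqb_spec (0 + 2 * Z.of_nat r - Z.of_nat m) 0); [lia|].
destruct (Z.ltb_spec (0 + 2 * Z.of_nat r - Z.of_nat m) 0); lia.
Qed.

Section Pattern.
Variables (N : nat) (pi : 'S_N) (w : nat).
Hypothesis hw : 1 <= w.
Hypothesis hbw : bandwidth pi w.

Definition tight v := D pi v v == w.
Definition lastT j := \max_(v < j + w | tight v) v.
Definition ph j := odd (lastT j + (2 * w - 1)).
Definition actp (t j : nat) := ~~ tight (j + w) && (odd (j + t) == ph j).

Fixpoint arr (t : nat) : 'S_N :=
  match t with 0 => pi | S t' => (swperm (arr t') (actp t) * arr t')%g end.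

Lemma lastT_le j : lastT j <= j + w.
Proof. apply/bigmax_leqP => i _; exact: ltnW. Qed.

Lemma lastT_S j : lastT j.+1 = if tight (j + w) then j + w else lastT j.
Proof.
rewrite /lastT addSn big_mkcond big_ord_recr /= -big_mkcond /=.
case: ifP => _; last by rewrite maxn0.
apply/maxn_idPr; exact: lastT_le.
Qed.

Lemma ph_S j : ~~ tight (j + w) -> ph j.+1 = ph j.
Proof. by move=> h; rewrite /ph lastT_S (negbTE h). Qed.

Lemma act_nonadj t j : actp t j -> ~~ actp t j.+1.
Proof.
rewrite /actp => /andP[h1 /eqP h2]. rewrite ph_S // -h2 addSn /= .
by case: (odd (j + t)); rewrite /= andbF.
Qed.

Lemma D_step_inact t v j : ~~ actp t.+1 j -> D (arr t.+1) v j = D (arr t) v j.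
Proof. move=> h /=; apply: D_same; by rewrite /sw (negbTE h) /= !andbF. Qed.

Lemma D_step_act t v j : 0 < j -> j < N -> actp t.+1 j ->
  (D (arr t.+1) v j <= D (arr t) v j.-1) \/ (D (arr t.+1) v j < D (arr t) v j.+1).
Proof.
move=> h0 hN ha /=. apply: D_active => //.
- exact: act_nonadj.
- apply/negP => h; have := act_nonadj h; by rewrite prednK // ha.
Qed.

Lemma D_barrier t v b : tight (b + w) -> D (arr t) v b = D pi v b.
Proof.
move=> hb; elim: t => [//|t IH]; rewrite D_step_inact // /actp hb //.
Qed.


Lemma ph_region v lo hi : lo < v -> v < hi -> (forall j, lo < j < hi -> ~~ tight (j + w)) ->
  forall j, lo < j < hi -> ph j = ph v.
Proof.
move=> hlo hhi hreg j /andP[hj1 hj2].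
case: (leqP v j) => hvj.
- have : forall d, v + d < hi -> ph (v + d) = ph v.
    elim=> [|d IH] hd; first by rewrite addn0.
    rewrite addnS ph_S; first by apply: IH; tolia.
    apply: hreg; apply/andP; split; tolia.
  move=> /(_ (j - v)); rewrite subnKC //; apply; tolia.
- have : forall d, d < v - lo -> ph (v - d) = ph v.
    elim=> [|d IH] hd; first by rewrite subn0.
    have e : v - d = (v - d.+1).+1 by tolia.
    rewrite -(ph_S (j := v - d.+1)); first by rewrite -e; apply: IH; tolia.
    apply: hreg; apply/andP; split; tolia.
  move=> /(_ (v - j)). have -> : v - (v - j) = j by tolia. apply; tolia.
Qed.

Lemma D0 (a : 'S_N) v : D a v 0 = 0.
Proof. rewrite /D; apply/eqP; rewrite cards_eq0; apply/eqP/setP => q; by rewrite !inE. Qed.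

Lemma D_init_bound v j :
  (Z.of_nat (D pi v j) <= EE (Z.of_nat w) (Z.of_nat (D pi v v)) (Z.of_nat j - Z.of_nat v))%Z.
Proof.
rewrite /EE.
case: (Z.eqb_spec (Z.of_nat j - Z.of_nat v) 0) => h1.
  have -> : j = v by lia. lia.
case: (Z.ltb_spec (Z.of_nat j - Z.of_nat v) 0) => h2.
  have h := D_le_int v j hbw. tolia.
have h := D_right v j hbw. move: h; rewrite /maxn; case: (ltnP (j - v) w) => h3 h; tolia.
Qed.

Lemma odd_SS n : odd n.+2 = odd n.
Proof. by rewrite /= negbK. Qed.

Lemma inv_main v lo hi : 0 < v -> v < N -> lo < v -> v < hi -> hi <= N ->
  (lo == 0) || tight (lo + w) -> (hi == N) || tight (hi + w) ->
  (forall j, lo < j < hi -> ~~ tight (j + w)) ->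
  forall t j, lo <= j <= hi ->
  (Z.of_nat (D (arr t) v j) <= MM (EE (Z.of_nat w) (Z.of_nat (D pi v v)))
        (if odd (j + t) == ph v then t else t.-1) (Z.of_nat j - Z.of_nat v))%Z.
Proof.
move=> hv0 hvN hlo hhi hhiN hlob hhib hreg.
set E := EE (Z.of_nat w) (Z.of_nat (D pi v v)).
have hE : forall x, (Z.max 0 x <= E x)%Z by apply: EE_ge; lia.
have hbar : forall b, tight (b + w) -> forall p : 'I_N, p < b -> pi p < b.
  move=> b hb p hp. have := tight_barrier hbw hw (eqP hb). rewrite addnK. by apply.
have hbd : forall t b, (b == lo) || (b == hi) -> D (arr t) v b <= b - v.
  move=> t b /orP[/eqP->|/eqP->].
  - case/orP: hlob => [/eqP->|hb]; first by rewrite D0.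
    rewrite D_barrier //; apply: D_bar_le; exact: hbar.
  - case/orP: hhib => [/eqP->|hb]; first exact: D_top.
    rewrite D_barrier //; apply: D_bar_le; exact: hbar.
have hbdM : forall t b m, (b == lo) || (b == hi) ->
    (Z.of_nat (D (arr t) v b) <= MM E m (Z.of_nat b - Z.of_nat v))%Z.
  move=> t b m hb. have h1 := hbd t b hb. have h2 := @MM_ge E hE m (Z.of_nat b - Z.of_nat v).
  tolia.
elim=> [|t IH] j hj.
  have -> : (if odd (j + 0) == ph v then 0 else 0.-1) = 0 by case: ifP.
  exact: D_init_bound.
case: (boolP ((j == lo) || (j == hi))) => hjb; first exact: hbdM.
have hj' : lo < j < hi.
  move: hjb hj; rewrite negb_or => /andP[/eqP n1 /eqP n2] /andP[h1 h2]; apply/andP; split; tolia.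
have /andP[hj1 hj2] := hj'.
have hj0 : 0 < j by tolia.
have hjN : j < N by tolia.
have hact : actp t.+1 j = (odd (j + t.+1) == ph v).
  by rewrite /actp (hreg _ hj') /= (ph_region hlo hhi hreg hj').
case: (boolP (odd (j + t.+1) == ph v)) => hpar.
- have hA : actp t.+1 j by rewrite hact.
  have hjl : lo <= j.-1 <= hi by apply/andP; split; tolia.
  have hjr : lo <= j.+1 <= hi by apply/andP; split; tolia.
  have p1 : (odd (j.-1 + t) == ph v) = true.
    have e : j + t.+1 = (j.-1 + t).+2 by tolia.
    by move: hpar; rewrite e odd_SS.
  have p2 : (odd (j.+1 + t) == ph v) = true by rewrite addSn -addnS.
  have IH1 := IH _ hjl. have IH2 := IH _ hjr. rewrite p1 in IH1. rewrite p2 in IH2.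
  have hD := @D_step_act t v j hj0 hjN hA.
  rewrite /=.
  have e1 : (Z.of_nat j.-1 - Z.of_nat v = Z.of_nat j - Z.of_nat v - 1)%Z by tolia.
  have e2 : (Z.of_nat j.+1 - Z.of_nat v = Z.of_nat j - Z.of_nat v + 1)%Z by tolia.
  rewrite e1 in IH1. rewrite e2 in IH2.
  simpl in hD. case: hD => hD; tolia.
- rewrite D_step_inact; last by rewrite hact.
  have p1 : (odd (j + t) == ph v) = true.
    move: hpar; rewrite addnS /=. by case: (odd (j + t)); case: (ph v).
  have := IH _ hj; rewrite p1 /= => h. by [].
Qed.

Lemma lastT_tight v : tight v -> lastT v = v.
Proof.
move=> ht; apply/eqP; rewrite eqn_leq; apply/andP; split.
- apply/bigmax_leqP => u hu. rewrite leqNgt; apply/negP => h.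
  have := tight_gap hbw hw (eqP ht) (eqP hu) h. have := ltn_ord u. move=> h1 h2. tolia.
- have hvw : v < v + w by tolia.
  exact: (@leq_bigmax_cond _ (fun u : 'I_(v + w) => tight u) (fun u => nat_of_ord u) (Ordinal hvw)).
Qed.

Lemma final_v v : 0 < v -> v < N -> D (arr (2 * w - 1)) v v = 0.
Proof.
move=> hv0 hvN.
have hbar : forall b, tight (b + w) -> forall p : 'I_N, p < b -> pi p < b.
  move=> b hb p hp. have := tight_barrier hbw hw (eqP hb). rewrite addnK. by apply.
case: (boolP (tight (v + w))) => hb.
  rewrite D_barrier //. have := D_bar_le v (hbar _ hb). rewrite subnn. by rewrite leqn0 => /eqP.
pose Plo := fun j => (j < v) && ((j == 0) || tight (j + w)).
have exlo : exists j, Plo j by exists 0; rewrite /Plo hv0.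
have ublo : forall j, Plo j -> j <= v by move=> j /andP[h _]; exact: ltnW.
case: (ex_maxnP exlo ublo) => lo /andP[hlo hlob] hlomax.
pose Phi := fun j => [&& v < j, j <= N & (j == N) || tight (j + w)].
have exhi : exists j, Phi j by exists N; rewrite /Phi hvN leqnn eqxx.
case: (ex_minnP exhi) => hi /and3P[hhi hhiN hhib] himin.
have hreg : forall j, lo < j < hi -> ~~ tight (j + w).
  move=> j /andP[h1 h2]; apply/negP => ht.
  case: (ltngtP j v) => h3.
  - have := hlomax j; rewrite /Plo h3 ht orbT => /(_ isT). move=> h4; tolia.
  - have := himin j; rewrite /Phi h3 ht orbT /=. have -> : j <= N by tolia. move=> /(_ isT) h4; tolia.
  - by move: hb; rewrite -h3 ht.
have H := @inv_main v lo hi hv0 hvN hlo hhi hhiN hlob hhib hreg (2 * w - 1) v.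
have hj : lo <= v <= hi by apply/andP; split; tolia.
move: (H hj). rewrite Z.sub_diag => H2.
have hk : D pi v v <= w.
  have := D_le_int v v hbw. move=> h; tolia.
suff : (MM (EE (Z.of_nat w) (Z.of_nat (D pi v v)))
          (if odd (v + (2 * w - 1)%nat) == ph v then (2 * w - 1)%nat else (2 * w - 1)%nat.-1) 0 <= 0)%Z.
  move=> h3. tolia.
case: (boolP (tight v)) => ht.
  rewrite /ph lastT_tight // eqxx.
  apply: MM_final1; tolia.
have hk' : D pi v v <= w - 1.
  move: ht; rewrite /tight => /eqP ht; tolia.
case: ifP => _.
  apply: MM_final1; tolia.
apply: MM_final2; tolia.
Qed.

Lemma perm_le_id (a : 'S_N) : (forall p, a p <= p) -> a = 1%g.
Proof.
move=> h; apply/permP => p; rewrite perm1.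
suff H : forall k (q : 'I_N), nat_of_ord q <= k -> a q = q by apply: (H p).
elim=> [|k IH] q hq.
  apply: ord_inj. have := h q. move=> h1. tolia.
case: (leqP q k) => hqk; first exact: IH.
have hq1 : nat_of_ord q = k.+1 by tolia.
case: (ltngtP (a q) q) => h1.
- have e := IH (a q) ltac:(tolia).
  have : a (a q) = a q by [].
  by move/perm_inj => e2; move: h1; rewrite e2 ltnn.
- have := h q; move=> h2; tolia.
- exact: ord_inj.
Qed.

Lemma arr_final : arr (2 * w - 1) = 1%g.
Proof.
apply: perm_le_id => p. rewrite leqNgt; apply/negP => hp.
have hv : p.+1 < N by have h := ltn_ord (arr (2 * w - 1) p); tolia.
have := final_v (ltn0Sn p) hv.
move/eqP; rewrite /D cards_eq0 => /eqP /setP /(_ p). by rewrite !inE ltnSn hp.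
Qed.

Lemma swperm_sq (a : 'S_N) act : (swperm a act * swperm a act = 1)%g.
Proof. apply/permP => x; by rewrite permM perm1 swperm_invol. Qed.

Lemma arr_prod t : pi = ((\prod_(i < t) swperm (arr i) (actp i.+1)) * arr t)%g.
Proof.
elim: t => [|t IH]; first by rewrite big_ord0 mul1g.
rewrite big_ord_recr /= -mulgA (mulgA (swperm _ _)) swperm_sq mul1g.
exact: IH.
Qed.

End Pattern.

Lemma part_a N (pi : 'S_N) w : 1 <= w -> bandwidth pi w -> prod_bw1_atmost pi (2 * w - 1).
Proof.
move=> hw hbw.
exists [seq swperm (arr pi w i) (actp pi w i.+1) | i <- iota 0 (2 * w - 1)]; split.
- by rewrite size_map size_iota.
- move=> s /mapP[i _ ->]; exact: swperm_bw1.
- rewrite big_map -{1}(subn0 (2 * w - 1)) -/(index_iota 0 (2 * w - 1)) big_mkord.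
  rewrite {1}(@arr_prod N pi w (2 * w - 1)) (@arr_final N pi w hw hbw) mulg1.
by [].
Qed.

Theorem corollary1p2 (w : nat) (hw : 1 <= w) :
  (forall (n : nat) (pi : 'S_n), bandwidth pi w -> prod_bw1_atmost pi (2 * w - 1))
  /\
  (forall n : nat, 2 * w <= n ->
     exists sigma : 'S_n,
       [/\ forall i : 'I_n, val (sigma i) = sigma_val w i,
           bandwidth sigma w
         & forall k, k < 2 * w - 1 -> ~ prod_bw1_atmost sigma k]).
Proof.
split.
- move=> n pi hbw; exact: part_a.
- exact: part_b.
Qed.
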